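(* Let $n\ge 6$ and let $G$ be a tree on $n$ vertices. Suppose $G\not\cong P_n$ and the degree sequence of $G$ is not $(3,2,\ldots,2,1,1,1)$ (one vertex of degree $3$, $n-4$ of degree $2$, three of degree $1$). Then $\mathrm{irr}_t(G)\ge 6n-20$. Equality holds if and only if the degree sequence of $G$ is $(3,3,2,\ldots,2,1,1,1,1)$, i.e. exactly two vertices of degree $3$, $n-6$ vertices of degree $2$ and $4$ vertices of degree $1$.
   Context: For a graph $G=(V,E)$ and $w\in V$, $d_G(w)$ is the degree of $w$. The total irregularity is $\mathrm{irr}_t(G)=\frac12\sum_{x,y\in V}|d_G(x)-d_G(y)|$, where the sum runs over all ordered pairs of vertices. $P_n$ is the path on $n$ vertices. Degree sequences are listed in nonincreasing order. *)

(* Defs.v *)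
From mathcomp Require Import all_boot all_order.
Set Implicit Arguments. Unset Strict Implicit. Unset Printing Implicit Defensive.

Section Graphs.
Variable T : finType.
Variable e : rel T.

Definition simple_graph : Prop := symmetric e /\ irreflexive e.

Definition deg (x : T) : nat := #|[set y | e x y]|.

Definition connected_graph : Prop := forall x y : T, connect e x y.

Definition acyclic_graph : Prop :=
  forall p : seq T, uniq p -> 3 <= size p -> ~~ cycle e p.

Definition is_tree : Prop := simple_graph /\ connected_graph /\ acyclic_graph.

(* total irregularity: (1/2) * sum over ordered pairs of |d(x) - d(y)|;
   the sum is even (symmetric), so nat division is exact. *)
Definition absdiff (a b : nat) : nat := (a - b) + (b - a).
Definition irr_t : nat :=
  (\sum_(x : T) \sum_(y : T) absdiff (deg x) (deg y)) %/ 2.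

Definition deg_seq : seq nat := sort geq [seq deg x | x <- enum T].
End Graphs.

Definition path_rel (n : nat) : rel 'I_n :=
  fun i j => (i.+1 == j :> nat) || (j.+1 == i :> nat).

Definition graph_iso (T U : finType) (e : rel T) (f : rel U) : Prop :=
  exists h : T -> U, bijective h /\ forall x y, f (h x) (h y) = e x y.

(* Main.v *)
Require Import Defs.
From mathcomp Require Import all_boot all_order zify.
Set Implicit Arguments. Unset Strict Implicit. Unset Printing Implicit Defensive.

Lemma sum_lt_min a N : \sum_(t < N) (t < a) = minn a N.
Proof.
elim: N => [|N IH]; first by rewrite big_ord0; lia.
rewrite big_ord_recr /= IH; case: ltnP => H; lia.
Qed.

Lemma absdiff_sum a b N : a <= N -> b <= N ->
  absdiff a b = \sum_(t < N) ((t < a) (+) (t < b)).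
Proof.
move=> Ha Hb.
have E : forall p q : bool, (p (+) q : nat) + 2 * (p && q) = p + q.
  by case; case.
have := sum_lt_min a N; have := sum_lt_min b N; have := sum_lt_min (minn a b) N.
have -> : \sum_(t < N) (t < minn a b) = \sum_(t < N) ((t < a) && (t < b)).
  by apply: eq_bigr => t _; rewrite leq_min.
have : \sum_(t < N) ((t < a) (+) (t < b) : nat) + 2 * \sum_(t < N) ((t < a) && (t < b) : nat)
   = \sum_(t < N) (t < a : nat) + \sum_(t < N) (t < b : nat).
  rewrite big_distrr -!big_split /=; apply: eq_bigr => t _; exact: E.
rewrite /absdiff; lia.
Qed.

Section Count.
Variable T : finType.

Lemma sum_bool (P : pred T) : \sum_(x : T) (P x : nat) = #|P|.
Proof. by rewrite -sum1_card [RHS]big_mkcond /=; apply: eq_bigr => x _; rewrite unfold_in; case: (P x). Qed.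

Lemma sum_xor (P : pred T) :
  \sum_(x : T) \sum_(y : T) ((P x) (+) (P y) : nat) = 2 * (#|P| * (#|T| - #|P|)).
Proof.
have HC := cardC P.
have -> : \sum_(x : T) \sum_(y : T) ((P x) (+) (P y) : nat) =
   \sum_(x : T) (if P x then #|[predC P]| else #|P|).
  apply: eq_bigr => x _; case: (P x).
  - rewrite -sum_bool; apply: eq_bigr => y _ /=; by rewrite ?inE unfold_in.
  - rewrite -sum_bool; apply: eq_bigr => y _ /=; by case: (P y).
rewrite (bigID P) /=.
rewrite (eq_bigr (fun _ => #|[predC P]|)); last by move=> x ->.
rewrite [X in _ + X](eq_bigr (fun _ => #|P|)); last by move=> x /negbTE ->.
rewrite !sum_nat_const.
have -> : #|[pred x | ~~ P x]| = #|[predC P]| by apply: eq_card.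

have -> : #|T| - #|P| = #|[predC P]| by lia.
rewrite [#|[predC P]| * _]mulnC; lia.
Qed.
End Count.

Section Irr.
Variable T : finType.
Variable e : rel T.
Definition cnt (t : nat) := #|[pred x | t < deg e x]|.

Lemma deg_le x : deg e x <= #|T|.
Proof. exact: max_card. Qed.

Lemma irr_cnt : irr_t e = \sum_(t < #|T|) cnt t * (#|T| - cnt t).
Proof.
rewrite /irr_t.
have -> : \sum_(x : T) \sum_(y : T) absdiff (deg e x) (deg e y) =
  \sum_(t < #|T|) \sum_(x : T) \sum_(y : T)
     (([pred z | t < deg e z] x) (+) ([pred z | t < deg e z] y) : nat).
  rewrite [RHS]exchange_big /=; apply: eq_bigr => x _.
  rewrite [RHS]exchange_big /=; apply: eq_bigr => y _.
  by rewrite (absdiff_sum (deg_le x) (deg_le y)).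
rewrite (eq_bigr (fun t : 'I_#|T| => 2 * (cnt t * (#|T| - cnt t)))); last first.
  by move=> t _; rewrite sum_xor.
by rewrite -big_distrr /= mulKn.
Qed.

Lemma degsum_cnt : \sum_(x : T) deg e x = \sum_(t < #|T|) cnt t.
Proof.
have -> : \sum_(x : T) deg e x = \sum_(x : T) \sum_(t < #|T|) (t < deg e x : nat).
  apply: eq_bigr => x _; rewrite sum_lt_min; have := deg_le x; lia.
rewrite exchange_big /=; apply: eq_bigr => t _.
by rewrite (sum_bool [pred z | t < deg e z]).
Qed.

Lemma cnt_mono s t : s <= t -> cnt t <= cnt s.
Proof.
move=> st; apply: subset_leq_card; apply/subsetP => x; rewrite !inE => H.
exact: leq_ltn_trans st H.
Qed.
End Irr.

Lemma card_count (T : finType) (P : pred T) : count P (enum T) = #|P|.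
Proof. by rewrite cardE /enum_mem size_filter (@eq_filter _ _ predT) // filter_predT. Qed.

Lemma count_mem_leq (s : seq nat) x :
  count_mem x s + count (leq x.+1) s = count (leq x) s.
Proof.
elim: s => [|a s IH] //=; rewrite -IH.
case: (ltngtP x a) => H; rewrite ?H /=; try lia.

Qed.

Lemma cum_perm (s1 s2 : seq nat) :
  (forall t, count (leq t) s1 = count (leq t) s2) -> perm_eq s1 s2.
Proof.
move=> H; rewrite /perm_eq; apply/allP => x _ /=; apply/eqP.
have := count_mem_leq s1 x; have := count_mem_leq s2 x.
rewrite !H => A B; apply: (@addIn (count (leq x.+1) s2)); by rewrite A B.
Qed.

Lemma sort_eq_of (s t : seq nat) : perm_eq s t -> sorted geq t -> sort geq s = t.
Proof.
move=> P St.
have tot : total geq by move=> a b; exact: leq_total.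
have tr : transitive geq by move=> a b c /= H1 H2; exact: leq_trans H2 H1.
have anti : antisymmetric geq by move=> a b /= H; apply/eqP; rewrite eqn_leq andbC.
rewrite -[RHS](sorted_sort tr St).
exact/(perm_sortP tot tr anti).
Qed.

Lemma count_degs (T : finType) (e : rel T) t :
  count (leq t) [seq deg e x | x <- enum T] = if t is k.+1 then cnt e k else #|T|.
Proof.
rewrite count_map; case: t => [|k].
  by rewrite (@eq_count _ _ predT) // count_predT cardE.
by rewrite card_count.
Qed.

Section Graph.
Variable T : finType.
Variable e : rel T.
Hypothesis esym : symmetric e.
Hypothesis eirr : irreflexive e.
Hypothesis eacy : acyclic_graph e.

Definition goodp (r : rel T) (q : seq T) : bool :=
  uniq q && (if q is y :: s then path r y s else true).

Lemma longest (r : rel T) :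
  exists q, goodp r q /\ forall q', goodp r q' -> size q' <= size q.
Proof.
pose P k := [exists t : k.-tuple T, goodp r t].
have exP : exists k, P k.
  exists 0; apply/existsP; exists [tuple]; by [].
have ubP : forall k, P k -> k <= #|T|.
  move=> k /existsP [t /andP [U _]].
  by rewrite -(size_tuple t) -(card_uniqP U) max_card.
case: (ex_maxnP exP ubP) => k /existsP [t Ht] Hmax.
exists t; split => // q' Hq'.
rewrite size_tuple; apply: Hmax; apply/existsP; exists (in_tuple q'); by [].
Qed.

Lemma last_take (a : T) s j : j < size s -> last a (take j.+1 s) = nth a s j.
Proof.
move=> Hj; rewrite (last_nth a) size_take.
case: ifP => H /=; first by rewrite nth_take.
have E : size s = j.+1 by lia.
by rewrite -E take_size E.
Qed.

Lemma no_chord (r : rel T) (rsub : subrel r e) (rsym : symmetric r) a s j :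
  goodp r (a :: s) -> j < size s -> 1 <= j -> r a (nth a s j) -> False.
Proof.
move=> /andP [U P] Hj H1 Hr.
have Uc : uniq (a :: take j.+1 s) by rewrite -/(take j.+2 (a :: s)) take_uniq.
have Sc : 3 <= size (a :: take j.+1 s) by rewrite /= size_take; case: ifP; lia.
have /negP := eacy Uc Sc; apply.
rewrite /= rcons_path; apply/andP; split.
  apply: (sub_path rsub); exact: take_path.
rewrite last_take // esym; exact: rsub.
Qed.

Lemma deg3 x a b c : e x a -> e x b -> e x c -> a != b -> a != c -> b != c ->
  3 <= deg e x.
Proof.
move=> ea eb ec ab ac bc; rewrite /deg cardE.
have -> : 3 = size [:: a; b; c] by [].
apply: uniq_leq_size; first by rewrite /= !inE negb_or ab ac bc.
by move=> y; rewrite !inE mem_enum inE => /or3P [] /eqP ->.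
Qed.


Definition eS (S : {set T}) : rel T := [rel x y | (x \in S) && (y \in S) && e x y].
Definition dS (S : {set T}) x := #|[set y in S | e x y]|.
Definition connS (S : {set T}) := forall x y, x \in S -> y \in S -> connect (eS S) x y.

Lemma eS_sub S : subrel (eS S) e.
Proof. by move=> x y /andP []. Qed.

Lemma eS_sym S : symmetric (eS S).
Proof. by move=> x y; rewrite /eS /= esym [(x \in S) && _]andbC. Qed.

Lemma first_step (r : rel T) x y : connect r x y -> x != y -> exists z, r x z.
Proof.
move=> /connectP [[|z p]] /=; first by move=> _ ->; rewrite eqxx.
by move=> /andP [H _] _ _; exists z.
Qed.

Lemma leaf (S : {set T}) : 1 < #|S| -> connS S -> exists2 v, v \in S & dS S v = 1.
Proof.
move=> /card_gt1P [a [b [aS bS ab]]] C.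
have [z Haz] := first_step (C a b aS bS) ab.
have [q [Gq Mq]] := longest (eS S).
have := Mq [:: a; z]; rewrite /goodp /= Haz !inE andbT.
have -> : a != z by apply/eqP => E; move: (eS_sub Haz); rewrite E eirr.
move=> /(_ isT) Sq.
case: q Gq Mq Sq => [|y [|z' s]] //= Gq Mq _.
move: (Gq) => /andP [U P0]; move: (P0) => /andP [Hyz Ps].
exists y; first by move: Hyz => /andP [/andP []].
apply/eqP/cards1P; exists z'; apply/setP => w; rewrite !inE.
apply/idP/idP; last by move=> /eqP ->; move: Hyz => /andP [/andP [_ ->] ->].
move=> /andP [wS ew].
have ryw : eS S y w.
  by rewrite /eS /= wS ew; move: Hyz => /andP [/andP [-> _] _].
have wq : w \in y :: z' :: s.
  apply: contraT => wq.
  have G' : goodp (eS S) [:: w, y, z' & s].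
    apply/andP; split; first by rewrite cons_uniq wq U.
    apply/andP; split => //; by rewrite eS_sym.
  by have := Mq _ G'; rewrite ltnn.
move: wq; rewrite in_cons => /orP [/eqP wy|].
  by move: ew; rewrite wy eirr.
move=> wq; have Hi := wq; rewrite -index_mem in Hi.
case Ei : (index w (z' :: s)) => [|i].
  by rewrite -(nth_index y wq) Ei.
exfalso; apply: (no_chord (@eS_sub S) (@eS_sym S) Gq (j := i.+1)).
- by rewrite -Ei.
- by [].
- by rewrite -Ei nth_index.
Qed.

Lemma path_transfer (S : {set T}) v x p :
  path (eS S) x p -> v \notin x :: p -> path (eS (S :\ v)) x p.
Proof.
elim: p x => [|y p IH] x //=.
rewrite !inE !negb_or => /andP [/andP [/andP [xS yS] exy] P] /and3P [xv yv vp].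
apply/andP; split; first by rewrite /eS /= !in_setD1 (eq_sym x) (eq_sym y) xv xS yv yS exy.
by apply: IH => //; rewrite inE negb_or yv.
Qed.

Lemma connS_D1 (S : {set T}) v : connS S -> v \in S -> dS S v = 1 -> connS (S :\ v).
Proof.
move=> C vS dv x y; rewrite !in_setD1 => /andP [xv xS] /andP [yv yS].
have := C x y xS yS => /connectP [p0 P0 Ey].
move: Ey; case: (shortenP P0) => p P U _ Ey; subst y.
apply/connectP; exists p => //; apply: path_transfer => //.
rewrite inE negb_or eq_sym xv /=; apply/negP => vp.
move: (dv) => /eqP /cards1P [u Hu].
case: (splitPr vp) P U yv => p1 p2 P U yv.
case: p2 P U yv => [|b p2] P U yv.
  by rewrite last_cat /= eqxx in yv.
move: P; rewrite cat_path => /andP [_] /=; rewrite -/(eS S) => /andP [av /andP [vb _]].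
have : last x p1 \in [set y in S | e v y].
  by rewrite inE; move: av; rewrite /eS /= esym => /andP [/andP [-> _] ->].
have : b \in [set y in S | e v y].
  by rewrite inE; move: vb; rewrite /eS /= => /andP [/andP [_ ->] ->].
rewrite Hu !inE => /eqP bu /eqP au.
move: U; rewrite -cat_cons cat_uniq => /and3P [_ /hasPn H _].
have := H b; rewrite !inE eqxx orbT => /(_ isT).
by rewrite bu -au -in_cons mem_last.
Qed.

Lemma sum_bool_in (A : {set T}) (b : pred T) :
  \sum_(x in A) (b x : nat) = #|[set x | (x \in A) && b x]|.
Proof.
rewrite -sum1dep_card big_mkcondr; apply: eq_bigr => x _; by case: (b x).
Qed.

Lemma tree_sum k : forall S : {set T}, #|S| = k.+1 -> connS S ->
  \sum_(x in S) dS S x = 2 * k.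
Proof.
elim: k => [|k IH] S HS C.
  move/eqP: HS => /cards1P [x0 ->]; rewrite big_set1 /dS.
  apply/eqP; rewrite cards_eq0; apply/eqP/setP => y; rewrite !inE.
  by case: eqP => // ->; rewrite eirr.
have [v vS dv] : exists2 v, v \in S & dS S v = 1 by apply: leaf => //; rewrite HS.
have HS' : #|S :\ v| = k.+1 by move: HS; rewrite (cardsD1 v) vS; lia.
have IH' := IH _ HS' (connS_D1 C vS dv).
rewrite (big_setD1 _ vS) dv.
rewrite (eq_bigr (fun x => dS (S :\ v) x + (e v x : nat))); last first.
  move=> x; rewrite in_setD1 => /andP [xv xS].
  rewrite /dS (cardsD1 v [set y in S | e x y]) inE vS esym /= addnC; congr (_ + _).
  by apply: eq_card => y; rewrite !inE andbA.
rewrite /= big_split /= IH' sum_bool_in.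
have -> : #|[set x | (x \in S :\ v) && e v x]| = 1.
  rewrite -dv; apply: eq_card => y; rewrite !inE.
  case: (eqVneq y v) => [->|] /=; first by rewrite eirr andbF.
  by [].
lia.
Qed.

Lemma degsum_tree : connected_graph e -> \sum_(x : T) deg e x = 2 * (#|T| - 1).
Proof.
move=> C.
case: (posnP #|T|) => [T0|Tpos].
  by rewrite T0 big1 // => x _; move: T0; rewrite -cardsT (cardsD1 x) in_setT.
have HS : #|[set: T]| = (#|T| - 1).+1 by rewrite cardsT; lia.
have CS : connS [set: T].
  move=> x y _ _; rewrite (@eq_connect _ _ e) //.
  by move=> a b; rewrite /eS /= !in_setT.
rewrite -(tree_sum HS CS).
apply: eq_big => [x|x _]; first by rewrite in_setT.
by apply: eq_card => y; rewrite !inE.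
Qed.

Lemma deg_pos : connected_graph e -> 1 < #|T| -> forall x, 0 < deg e x.
Proof.
move=> C HT x.
have [y yx] : exists y, y != x.
  move: HT; rewrite -cardsT (cardsD1 x) in_setT /= => /card_gt0P [y].
  by rewrite in_setD1 => /andP [yx _]; exists y.
have xy : x != y by rewrite eq_sym.
have [z xz] := first_step (C x y) xy.
by apply/card_gt0P; exists z; rewrite inE.
Qed.

Lemma exit_lemma (A : pred T) x p : A x -> path e x p -> ~~ A (last x p) ->
  exists u w, [/\ A u, ~~ A w & e u w].
Proof.
elim: p x => [|y p IH] x /= Ax; first by rewrite Ax.
move=> /andP [exy P] L.
case Ay : (A y); first exact: IH Ay P L.
by exists x, y; rewrite Ay.
Qed.

Lemma path_iso : connected_graph e -> 0 < #|T| -> (forall x, deg e x <= 2) ->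
  graph_iso e (@path_rel #|T|).
Proof.
move=> C Tpos D2.
have [x0 _] : exists x0 : T, x0 \in [set: T] by apply/card_gt0P; rewrite cardsT.
have [q [Gq Mq]] := longest e.
have := Mq [:: x0] isT; case: q Gq Mq => [|a s] // Gq Mq _.
move EQ: (a :: s) => Q.
move: (Gq) => /andP [U P]; rewrite EQ in U Mq.
have SQ : size Q = (size s).+1 by rewrite -EQ.
have adjQ : forall k, k.+1 < size Q -> e (nth a Q k) (nth a Q k.+1).
  move=> k Hk; rewrite SQ in Hk; rewrite -EQ; have := (pathP a P) k Hk; by [].
have no3 : forall u b c d, e u b -> e u c -> e u d -> b != c -> b != d -> c != d -> False.
  move=> u b c d ub uc ud bc bd cd; have := deg3 ub uc ud bc bd cd.
  by rewrite ltnNge D2.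
have cover : forall z, z \in Q.
  move=> z; apply: contraT => zQ.
  have [p Pp Lp] := connectP (C a z).
  have LQ : ~~ (mem Q) (last a p) by rewrite -Lp.
  have aQ : a \in Q by rewrite -EQ mem_head.
  have [u [w [uQ wQ uw]]] := @exit_lemma (mem Q) a p aQ Pp LQ.
  have {}uQ : u \in Q := uQ.
  have {}wQ : w \notin Q := wQ.
  have Hi := uQ; rewrite -index_mem in Hi.
  set i := index u Q in Hi.
  have ui : u = nth a Q i by rewrite nth_index.
  clearbody i.
  case Ei : i => [|i'].
    have G : goodp e (w :: Q).
      apply/andP; split; first by rewrite cons_uniq wQ U.
      have ua : u = a by rewrite ui Ei -EQ.
      rewrite -EQ; apply/andP; split; [by rewrite esym -ua | exact: P].
    by have := Mq _ G; rewrite /= ltnn.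
  case: (ltnP i'.+2 (size Q)) => Hi2.
    exfalso; apply: (no3 u (nth a Q i') (nth a Q i'.+2) w).
    - by rewrite esym ui Ei; apply: adjQ; lia.
    - by rewrite ui Ei; apply: adjQ; lia.
    - exact: uw.
    - by rewrite nth_uniq //; lia.
    - by apply: contraNneq wQ => <-; apply: mem_nth; lia.
    - by apply: contraNneq wQ => <-; apply: mem_nth.
  have Ls : u = last a s.
    rewrite ui (last_nth a) -EQ; congr nth; move: Hi Hi2; rewrite SQ; lia.
  have G : goodp e (rcons Q w).
    apply/andP; split; first by rewrite rcons_uniq wQ U.
    rewrite -EQ; change (path e a (rcons s w)).
    by rewrite rcons_path P -Ls uw.
  by have := Mq _ G; rewrite size_rcons ltnn.
have HQ : size Q = #|T|.
  by rewrite -(card_uniqP U); apply: eq_card => z; rewrite cover.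
have Hlt : forall x, index x Q < #|T| by move=> x; rewrite -HQ index_mem.
have far : forall i j, i.+1 < j -> j < size Q -> ~~ e (nth a Q i) (nth a Q j).
  move=> i j ij jQ; apply/negP => E; move: jQ; rewrite SQ => jQ.
  case: i ij E => [|i'] ij E.
    case: j ij jQ E => [|j] // ij jQ E.
    apply: (@no_chord e (fun _ _ h => h) esym a s j Gq); try lia.
    by rewrite -EQ in E.
  apply: (no3 (nth a Q i'.+1) (nth a Q i') (nth a Q i'.+2) (nth a Q j)) => //.
  - by rewrite esym; apply: adjQ; lia.
  - by apply: adjQ; lia.
  - by rewrite nth_uniq // ?SQ; lia.
  - by rewrite nth_uniq // ?SQ; lia.
  - by rewrite nth_uniq // ?SQ; lia.
have adj : forall i j, i < size Q -> j < size Q ->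
    e (nth a Q i) (nth a Q j) = (i.+1 == j) || (j.+1 == i).
  move=> i j iQ jQ.
  case: (ltngtP i j) => ij.
  - case: (eqVneq i.+1 j) => [<-|ne] /=; first by apply: adjQ; lia.
    have -> : (j.+1 == i) = false by apply/negbTE; rewrite neq_ltn; lia.
    by apply/negbTE/far => //; lia.
  - case: (eqVneq j.+1 i) => [<-|ne] /=; first by rewrite orbT esym; apply: adjQ; lia.
    have -> : (i.+1 == j) = false by apply/negbTE; rewrite neq_ltn; lia.
    by rewrite esym; apply/negbTE/far => //; lia.
  - by rewrite ij eirr; symmetry; apply/norP; split; apply/eqP; lia.
exists (fun x => Ordinal (Hlt x)); split.
  exists (fun i : 'I_#|T| => nth a Q i).
    by move=> x; rewrite /= nth_index.
  by move=> i; apply: val_inj; rewrite /= index_uniq // HQ.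
move=> x y; rewrite /path_rel /=.
rewrite -[e x y](congr2 e (nth_index a (cover x)) (nth_index a (cover y))).
by rewrite adj // index_mem.
Qed.

End Graph.

Lemma arith n c1 c2 m R I : 6 <= n -> c1 + m + 2 = n -> c2 <= m -> c2 <= c1 -> 2 <= m ->
  I = c1*(n-c1) + R -> m*(n-c2) <= R -> 6*n-20 <= I /\ (I = 6*n-20 -> m = 2 /\ c2 = 2).
Proof.
move=> Hn Hs H2 H3 Hm -> HR.
have Hc1 : n - c1 = m + 2 by lia.
rewrite Hc1.
have K : 6*n - 20 <= c1*(m+2) + m*(n-c2) /\ (c1*(m+2) + m*(n-c2) = 6*n-20 -> m = 2 /\ c2 = 2).
  have [Hle|Hgt] := leqP (2*m) (n-2).
  - have : m*(n-m) <= m*(n-c2) by apply: leq_mul => //; lia.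
    nia.
  - have : m*(n-c1) <= m*(n-c2) by apply: leq_mul => //; lia.
    nia.
lia.
Qed.

Lemma split3 (F : nat -> nat) n : 3 <= n ->
  \sum_(t < n) F t = F 0 + F 1 + F 2 + \sum_(3 <= t < n) F t.
Proof.
move=> Hn; rewrite -(big_mkord xpredT) big_ltn; last lia.
rewrite big_ltn; last lia. rewrite big_ltn; last lia. by rewrite !addnA.
Qed.

Lemma sorted_T1 k : sorted geq (3 :: nseq k 2 ++ nseq 3 1).
Proof.
rewrite /=; have : 2 <= 3 by []; move: 3 => x.
elim: k x => [|k IH] x Hx /=; last by rewrite Hx IH.
by rewrite andbT; lia.
Qed.

Lemma sorted_T0 k : sorted geq ([:: 3; 3] ++ nseq k 2 ++ nseq 4 1).
Proof.
rewrite /=; have : 2 <= 3 by []; move: 3 => x.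
elim: k x => [|k IH] x Hx /=; last by rewrite Hx IH.
by rewrite andbT; lia.
Qed.

Theorem theorem7 (T : finType) (e : rel T) :
  6 <= #|T| ->
  is_tree e ->
  ~ graph_iso e (@path_rel #|T|) ->
  deg_seq e <> 3 :: nseq (#|T| - 4) 2 ++ nseq 3 1 ->
  6 * #|T| - 20 <= irr_t e /\
  (irr_t e = 6 * #|T| - 20 <->
   deg_seq e = [:: 3; 3] ++ nseq (#|T| - 6) 2 ++ nseq 4 1).
Proof.
move=> Hn [[esym eirr] [C acy]] Niso Nds1.
set n := #|T| in Hn Niso Nds1 *.
have c0 : cnt e 0 = n.
  have n1 : 1 < #|T| by rewrite -/n; lia.
  by apply: eq_card => x; rewrite !inE (deg_pos C n1).
have Hsum : cnt e 0 + cnt e 1 + cnt e 2 + \sum_(3 <= t < n) cnt e t = 2 * (n - 1).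
  rewrite -split3; last lia.
  by rewrite -degsum_cnt (degsum_tree esym eirr acy C).
have Hirr : irr_t e = cnt e 0 * (n - cnt e 0) + cnt e 1 * (n - cnt e 1)
   + cnt e 2 * (n - cnt e 2) + \sum_(3 <= t < n) cnt e t * (n - cnt e t).
  by rewrite irr_cnt (split3 (fun t => cnt e t * (n - cnt e t))) //; lia.
set r3 := \sum_(3 <= t < n) cnt e t in Hsum.
set R3 := \sum_(3 <= t < n) cnt e t * (n - cnt e t) in Hirr.
have HR3 : r3 * (n - cnt e 2) <= R3.
  rewrite /r3 /R3 big_distrl /= big_nat_cond [X in _ <= X]big_nat_cond.
  apply: leq_sum => t /andP [/andP [t3 _] _]; apply: leq_mul => //.
  apply: leq_sub2l; apply: cnt_mono; lia.
have c3r3 : cnt e 3 <= r3 by rewrite /r3 big_ltn //; lia.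
have tail : cnt e 3 = 0 -> r3 = 0 /\ R3 = 0.
  move=> H3; have Z : forall t, 3 <= t -> cnt e t = 0.
    by move=> t Ht; have := cnt_mono e Ht; lia.
  split; rewrite /r3 /R3 big_nat_cond big1 // => t /andP [/andP [t3 _] _]; by rewrite Z.
have m21 : cnt e 2 <= cnt e 1 by apply: cnt_mono.
have m32 : cnt e 3 <= cnt e 2 by apply: cnt_mono.
have hi : forall k, cnt e k.+3 <= cnt e 3 by move=> k; apply: cnt_mono.
case: (posnP (cnt e 2 + r3)) => [m0|mpos].
  exfalso; apply: Niso; apply: path_iso => //; first lia.
  move=> x; rewrite leqNgt; apply/negP => Hx.
  have : 0 < cnt e 2 by apply/card_gt0P; exists x; rewrite inE.
  lia.
case: (eqVneq (cnt e 2 + r3) 1) => [m1|m2].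
  exfalso; apply: Nds1; apply: sort_eq_of; last exact: sorted_T1.
  have c2 : cnt e 2 = 1.
    case: (posnP (cnt e 2)) => H; last lia.
    by have [] := tail (ltac:(lia)); lia.
  have c3 : cnt e 3 = 0 by lia.
  apply: cum_perm => t; rewrite count_degs -/n /= count_cat !count_nseq.
  case: t => [|[|[|[|t]]]] /=; try lia.
  by have := hi t; lia.
have [L1 L2] := @arith n (cnt e 1) (cnt e 2) (cnt e 2 + r3)
    (cnt e 2 * (n - cnt e 2) + R3) (irr_t e) Hn ltac:(lia) ltac:(lia) m21 ltac:(lia)
    ltac:(rewrite Hirr c0; lia) ltac:(rewrite mulnDl; lia).
split => //; split.
  move=> /L2 [H1 H2].
  have c3 : cnt e 3 = 0 by lia.
  apply: sort_eq_of; last exact: sorted_T0.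
  apply: cum_perm => t; rewrite count_degs -/n /= count_cat !count_nseq.
  case: t => [|[|[|[|t]]]] /=; try lia.
  by have := hi t; lia.
move=> Hds.
have P : perm_eq [seq deg e x | x <- enum T] ([:: 3; 3] ++ nseq (n - 6) 2 ++ nseq 4 1).
  by rewrite -Hds /deg_seq perm_sym perm_sort.
have cnt_t : forall t, count (leq t) [seq deg e x | x <- enum T] =
    count (leq t) ([:: 3; 3] ++ nseq (n - 6) 2 ++ nseq 4 1) by move/permP: P.
have := cnt_t 2; have := cnt_t 3; have := cnt_t 4.
rewrite !count_degs /= !count_cat !count_nseq /= => c3 c2 c1.
have [Z1 Z2] := tail (ltac:(lia)).
rewrite Hirr c0 Z2 c2.
have -> : cnt e 1 = n - 4 by lia.
have -> : n - (n - 4) = 4 by lia.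
lia.
Qed.
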